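(* Under the setting, assumptions (A1)–(A2) and the algorithm PDAc-L described in the context, fix any $(x^\star,y^\star)\in\Omega$, let $J(x,y)=\mathcal L(x,y^\star)-\mathcal L(x^\star,y)$ and for $n\ge1$ define $$a_n=\frac{\psi}{\psi-1}\|z_{n+1}-x^\star\|^2+\frac1\beta\|y_{n-1}-y^\star\|^2+\omega\delta_{n-1}\|x_n-x_{n-1}\|^2,$$ $$b_n=-\frac{\tau_n\tau_{n-1}}{\xi}\|\theta_n\|^2+\frac1\beta\|y_n-y_{n-1}\|^2+\omega\delta_{n-1}\|x_n-x_{n-1}\|^2-2\tau_n\Phi_n^y.$$ Then for all $n\ge1$, $a_{n+1}+2\tau_nJ(x_n,y_n)\le a_n-b_n$.
   Context: Let $f:\mathbb{R}^p\to(-\infty,+\infty]$ and $g:\mathbb{R}^q\to(-\infty,+\infty]$ be proper closed convex functions; $f^*(y)=\sup_u\{\langle y,u\rangle-f(u)\}$ is the Fenchel conjugate, $\mathrm{dom}(h)=\{x:h(x)<+\infty\}$, and for $\lambda>0$, $\mathrm{Prox}_{\lambda h}(x)=\arg\min_u\{h(u)+\frac{1}{2\lambda}\|u-x\|^2\}$. Let $\Phi:\mathrm{dom}(g)\times\mathrm{dom}(f^* )\to\mathbb{R}$ be continuous and $\mathcal L(x,y)=g(x)+\Phi(x,y)-f^*(y)$. Let $\Omega$ be the set of $(x^\star,y^\star)\in\mathrm{dom}(g)\times\mathrm{dom}(f^* )$ with $-\nabla_x\Phi(x^\star,y^\star)\in\partial g(x^\star)$ and $\nabla_y\Phi(x^\star,y^\star)\in\partial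 f^*(y^\star)$. Assume: (A1) $\Omega\neq\emptyset$, $\mathrm{dom}(g)\times\mathrm{dom}(f^* )\subseteq\mathrm{dom}(\Phi)$, and $\mathcal L(x^\star,y^\star)$ is finite; (A2) for each $y\in\mathrm{dom}(f^* )$, $\Phi(\cdot,y)$ is convex and differentiable, for each $x\in\mathrm{dom}(g)$, $\Phi(x,\cdot)$ is concave and differentiable, and for all bounded $\mathcal X\subset\mathbb R^q$, $\mathcal Y\subset\mathbb R^p$ there exist $L_{yy},L_{xx}\ge 0$, $L_{xy}>0$ with $\|\nabla_y\Phi(x,y)-\nabla_y\Phi(x,\tilde y)\|\le L_{yy}\|y-\tilde y\|$ and $\|\nabla_x\Phi(x,y)-\nabla_x\Phi(\tilde x,\tilde y)\|\le L_{xx}\|x-\tilde x\|+L_{xy}\|y-\tilde y\|$ for all $x,\tilde x\in\mathcal X\cap\mathrm{dom}(g)$, $y,\tilde y\in\mathcal Y\cap\mathrm{dom}(f^* )$. Algorithm PDAc-L: choose $\psi\in(1,1+\sqrt3)$, $\xi>0$, $\varphi>1$ with $\omega:=2\psi-\xi-\frac{\psi^3\varphi}{1+\psi}>0$, $\tau_{\max}>0$, $\nu\in(0,1)$, $\mu\in(0,1)$, $\eta\in[0,1)$, an integer $M\ge1$, $\beta>0$, $x_0\in\mathrm{dom}(g)$, $y_0\in\mathrm{dom}(f^* )$, $\tau_0\in(0,\tau_{\max}]$; set $z_0=x_0$, $\delta_0=1$. For $n=1,2,\dots$: (1) $z_n=\frac{\psi-1}{\psi}x_{n-1}+\frac1\psi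 z_{n-1}$ and $x_n=\mathrm{Prox}_{\tau_{n-1}g}(z_n-\tau_{n-1}\nabla_x\Phi(x_{n-1},y_{n-1}))$. (2) Let $\tau=\min\{\varphi\tau_{n-1},\tau_{\max}\}$; set $\tau_n=\tau\mu^i$ and $y_n=\mathrm{Prox}_{\beta\tau_n f^*}(y_{n-1}+\beta\tau_n\nabla_y\Phi(x_n,y_{n-1}))$, where $i$ is the smallest nonnegative integer such that $\frac{\tau_n\tau_{n-1}}{\xi}\|\theta_n\|^2+2\tau_n\Phi_n^y\le\nu r_n+(1-\nu)c_n$, with $\theta_n=\nabla_x\Phi(x_n,y_n)-\nabla_x\Phi(x_{n-1},y_{n-1})$, $\Phi_n^y=\Phi(x_n,y_{n-1})+\langle\nabla_y\Phi(x_n,y_{n-1}),y_n-y_{n-1}\rangle-\Phi(x_n,y_n)$, $r_n=\omega\delta_{n-1}\|x_n-x_{n-1}\|^2+\frac1\beta\|y_n-y_{n-1}\|^2$, $c_n=\frac{\eta}{|\mathcal I_n|}\sum_{i\in\mathcal I_n}r_i$, $\mathcal I_n=\{n-1,n-2,\dots,\max\{n-M,1\}\}$ (the $r_i$ for $i<n$ being the values from earlier iterations; for $n=1$, $\mathcal I_1=\emptyset$ and $c_1:=0$). (3) $\delta_n=\tau_n/\tau_{n-1}$. *)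

(* Defs.v *)
From HB Require Import structures.
From mathcomp Require Import all_boot all_order all_algebra.
From mathcomp Require Import all_classical all_reals ereal.
Set Implicit Arguments. Unset Strict Implicit. Unset Printing Implicit Defensive.
Import Order.TTheory GRing.Theory Num.Theory.
Local Open Scope classical_set_scope.
Local Open Scope ring_scope.

Section PDAcL.
Context {R : realType}.

Definition dotv {n} (u v : 'rV[R]_n) : R := \sum_(i < n) u 0 i * v 0 i.
Definition sqn {n} (u : 'rV[R]_n) : R := dotv u u.
Definition enorm {n} (u : 'rV[R]_n) : R := Num.sqrt (sqn u).

Definition edom {n} (h : 'rV[R]_n -> \bar R) : set 'rV[R]_n :=
  [set x | (h x < +oo)%E].

Definition proper_fun {n} (h : 'rV[R]_n -> \bar R) : Prop :=
  (forall x, h x != -oo%E) /\ (exists x, (h x < +oo)%E).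
Definition lsc_fun {n} (h : 'rV[R]_n -> \bar R) : Prop :=
  forall x (a : R), (a%:E < h x)%E ->
    exists2 d : R, 0 < d & forall u, enorm (u - x) < d -> (a%:E < h u)%E.
Definition convex_fun {n} (h : 'rV[R]_n -> \bar R) : Prop :=
  forall (x y : 'rV[R]_n) (t : R), 0 <= t <= 1 ->
    (h (t *: x + (1 - t) *: y)%R <= t%:E * h x + (1 - t)%:E * h y)%E.
Definition proper_closed_convex {n} (h : 'rV[R]_n -> \bar R) : Prop :=
  [/\ proper_fun h, lsc_fun h & convex_fun h].

Definition fconj {n} (f : 'rV[R]_n -> \bar R) : 'rV[R]_n -> \bar R :=
  fun y => ereal_sup [set ((dotv y u)%:E - f u)%E | u in [set: 'rV[R]_n]].

Definition subdiff {n} (h : 'rV[R]_n -> \bar R) (x v : 'rV[R]_n) : Prop :=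
  h x \is a fin_num /\ forall u, (h x + (dotv v (u - x)%R)%:E <= h u)%E.

Definition is_prox {n} (h : 'rV[R]_n -> \bar R) (lam : R) (z p : 'rV[R]_n) : Prop :=
  forall u, (h p + ((2 * lam)^-1 * sqn (p - z))%R%:E
             <= h u + ((2 * lam)^-1 * sqn (u - z))%R%:E)%E.

Definition is_grad {n} (F : 'rV[R]_n -> R) (x G : 'rV[R]_n) : Prop :=
  forall eps : R, 0 < eps -> exists2 d : R, 0 < d & forall h : 'rV[R]_n,
    enorm h < d -> `|F (x + h) - F x - dotv G h| <= eps * enorm h.

Definition bounded_set {n} (X : set 'rV[R]_n) : Prop :=
  exists B : R, forall x, X x -> enorm x <= B.

Variables (p q : nat).
Implicit Types (f : 'rV[R]_p -> \bar R) (g : 'rV[R]_q -> \bar R)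
  (Phi : 'rV[R]_q -> 'rV[R]_p -> R)
  (gx : 'rV[R]_q -> 'rV[R]_p -> 'rV[R]_q) (gy : 'rV[R]_q -> 'rV[R]_p -> 'rV[R]_p).

Definition Lag f g Phi (x : 'rV[R]_q) (y : 'rV[R]_p) : \bar R :=
  (g x + (Phi x y)%:E - fconj f y)%E.

(* the saddle-point set Omega; gx, gy are the partial gradients of Phi *)
Definition in_Omega f g gx gy (xs : 'rV[R]_q) (ys : 'rV[R]_p) : Prop :=
  [/\ edom g xs, edom (fconj f) ys,
      subdiff g xs (- gx xs ys) & subdiff (fconj f) ys (gy xs ys)].

Definition assumption_A1 f g Phi gx gy : Prop :=
  (exists xs ys, in_Omega f g gx gy xs ys) /\
  (forall xs ys, in_Omega f g gx gy xs ys -> Lag f g Phi xs ys \is a fin_num).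

Definition Phi_continuous f g Phi : Prop :=
  forall x y, edom g x -> edom (fconj f) y ->
  forall eps : R, 0 < eps -> exists2 d : R, 0 < d & forall x' y',
    edom g x' -> edom (fconj f) y' -> enorm (x' - x) < d -> enorm (y' - y) < d ->
    `|Phi x' y' - Phi x y| < eps.

Definition assumption_A2 f g Phi gx gy : Prop :=
  [/\ (forall y, edom (fconj f) y ->
        (forall x x' (t : R), edom g x -> edom g x' -> 0 <= t <= 1 ->
           Phi (t *: x + (1 - t) *: x') y <= t * Phi x y + (1 - t) * Phi x' y)
        /\ (forall x, edom g x -> is_grad (fun u => Phi u y) x (gx x y))),
      (forall x, edom g x ->
        (forall y y' (t : R), edom (fconj f) y -> edom (fconj f) y' -> 0 <= t <= 1 ->
           t * Phi x y + (1 - t) * Phi x y' <= Phi x (t *: y + (1 - t) *: y'))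
        /\ (forall y, edom (fconj f) y -> is_grad (fun v => Phi x v) y (gy x y)))
    & (forall (X : set 'rV[R]_q) (Y : set 'rV[R]_p), bounded_set X -> bounded_set Y ->
        exists Lyy Lxx Lxy : R, [/\ 0 <= Lyy, 0 <= Lxx, 0 < Lxy &
          forall x x' y y', X x -> edom g x -> X x' -> edom g x' ->
            Y y -> edom (fconj f) y -> Y y' -> edom (fconj f) y' ->
            enorm (gy x y - gy x y') <= Lyy * enorm (y - y') /\
            enorm (gx x y - gx x' y') <= Lxx * enorm (x - x') + Lxy * enorm (y - y')])].

Definition omega_of (psi xi varphi : R) : R :=
  2 * psi - xi - psi ^+ 3 * varphi / (1 + psi).

Definition pdacl_params (psi xi varphi taumax nu mu eta beta : R) (M : nat) : Prop :=
  [/\ 1 < psi /\ psi < 1 + Num.sqrt 3, 0 < xi, 1 < varphi,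
      0 < omega_of psi xi varphi & 0 < taumax] /\
  [/\ 0 < nu < 1, 0 < mu < 1, 0 <= eta < 1, (1 <= M)%N & 0 < beta].

(* r_i (i >= 1), with the final iterates *)
Definition r_seq (omega beta : R) (x : nat -> 'rV[R]_q) (y : nat -> 'rV[R]_p)
  (delta : nat -> R) (i : nat) : R :=
  omega * delta i.-1 * sqn (x i - x i.-1) + beta^-1 * sqn (y i - y i.-1).

Definition c_seq (eta : R) (M : nat) (r : nat -> R) (n : nat) : R :=
  let lo := maxn (n - M) 1 in
  let k := (n - lo)%N in
  if k == 0%N then 0 else eta / k%:R * \sum_(lo <= i < n) r i.

(* line-search test at iteration n >= 1 for a trial step t and trial point yt *)
Definition ls_cond Phi gx gy (omega xi nu beta eta : R) (M : nat)
  (x : nat -> 'rV[R]_q) (y : nat -> 'rV[R]_p) (tau delta : nat -> R)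
  (n : nat) (t : R) (yt : 'rV[R]_p) : Prop :=
  let theta := gx (x n) yt - gx (x n.-1) (y n.-1) in
  let Phiy := Phi (x n) (y n.-1) + dotv (gy (x n) (y n.-1)) (yt - y n.-1)
              - Phi (x n) yt in
  let r := omega * delta n.-1 * sqn (x n - x n.-1) + beta^-1 * sqn (yt - y n.-1) in
  t * tau n.-1 / xi * sqn theta + 2 * t * Phiy
    <= nu * r + (1 - nu) * c_seq eta M (r_seq omega beta x y delta) n.

Definition pdacl_iterates f g Phi gx gy
  (psi xi varphi taumax nu mu eta beta : R) (M : nat)
  (x z : nat -> 'rV[R]_q) (y : nat -> 'rV[R]_p) (tau delta : nat -> R)
  (idx : nat -> nat) : Prop :=
  let omega := omega_of psi xi varphi in
  let LS := ls_cond Phi gx gy omega xi nu beta eta M x y tau delta in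
  [/\ edom g (x 0%N), edom (fconj f) (y 0%N), 0 < tau 0%N <= taumax,
      z 0%N = x 0%N & delta 0%N = 1] /\
  (
      forall n : nat,
        let tb := Num.min (varphi * tau n) taumax in
        [/\ z n.+1 = ((psi - 1) / psi) *: x n + psi^-1 *: z n,
            is_prox g (tau n) (z n.+1 - tau n *: gx (x n) (y n)) (x n.+1)
          & tau n.+1 = tb * mu ^+ idx n.+1] /\
        [/\
            is_prox (fconj f) (beta * tau n.+1)
              (y n + (beta * tau n.+1) *: gy (x n.+1) (y n)) (y n.+1),
            LS n.+1 (tau n.+1) (y n.+1),
            (forall j : nat, (j < idx n.+1)%N -> forall y' : 'rV[R]_p,
               is_prox (fconj f) (beta * (tb * mu ^+ j))
                 (y n + (beta * (tb * mu ^+ j)) *: gy (x n.+1) (y n)) y' ->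
               ~ LS n.+1 (tb * mu ^+ j) y')
          & delta n.+1 = tau n.+1 / tau n]).

Definition a_seq (psi xi varphi beta : R) (xs : 'rV[R]_q) (ys : 'rV[R]_p)
  (x z : nat -> 'rV[R]_q) (y : nat -> 'rV[R]_p) (delta : nat -> R) (n : nat) : R :=
  psi / (psi - 1) * sqn (z n.+1 - xs) + beta^-1 * sqn (y n.-1 - ys)
  + omega_of psi xi varphi * delta n.-1 * sqn (x n - x n.-1).

Definition b_seq Phi gx gy (psi xi varphi beta : R)
  (x : nat -> 'rV[R]_q) (y : nat -> 'rV[R]_p) (tau delta : nat -> R) (n : nat) : R :=
  let theta := gx (x n) (y n) - gx (x n.-1) (y n.-1) in
  let Phiy := Phi (x n) (y n.-1) + dotv (gy (x n) (y n.-1)) (y n - y n.-1)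
              - Phi (x n) (y n) in
  - (tau n * tau n.-1 / xi * sqn theta) + beta^-1 * sqn (y n - y n.-1)
  + omega_of psi xi varphi * delta n.-1 * sqn (x n - x n.-1) - 2 * tau n * Phiy.

Definition Jgap f g Phi (xs : 'rV[R]_q) (ys : 'rV[R]_p) x y : \bar R :=
  (Lag f g Phi x ys - Lag f g Phi xs y)%E.

End PDAcL.

(* Main.v *)
Require Import Defs.
From HB Require Import structures.
From mathcomp Require Import all_boot all_order all_algebra.
From mathcomp Require Import all_classical all_reals ereal.
From mathcomp Require Import ring lra.
Import Order.TTheory GRing.Theory Num.Theory.
Set Implicit Arguments. Unset Strict Implicit. Unset Printing Implicit Defensive.
Local Open Scope ring_scope.

Section Aux.
Context {R : realType}.

Lemma dotvC n (u v : 'rV[R]_n) : dotv u v = dotv v u.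
Proof. by apply: eq_bigr => i _; rewrite mulrC. Qed.
Lemma dotvDl n (u v w : 'rV[R]_n) : dotv (u + v) w = dotv u w + dotv v w.
Proof. by rewrite /dotv -big_split; apply: eq_bigr => i _; rewrite !mxE mulrDl. Qed.
Lemma dotvZl n a (u w : 'rV[R]_n) : dotv (a *: u) w = a * dotv u w.
Proof. by rewrite /dotv mulr_sumr; apply: eq_bigr => i _; rewrite !mxE mulrA. Qed.
Lemma dotvNl n (u w : 'rV[R]_n) : dotv (- u) w = - dotv u w.
Proof. by rewrite -scaleN1r dotvZl mulN1r. Qed.
Lemma dotvDr n (u v w : 'rV[R]_n) : dotv w (u + v) = dotv w u + dotv w v.
Proof. by rewrite dotvC dotvDl !(dotvC w). Qed.
Lemma dotvZr n a (u w : 'rV[R]_n) : dotv w (a *: u) = a * dotv w u.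
Proof. by rewrite dotvC dotvZl dotvC. Qed.
Lemma dotvNr n (u w : 'rV[R]_n) : dotv w (- u) = - dotv w u.
Proof. by rewrite dotvC dotvNl dotvC. Qed.
Lemma sqn_ge0 n (u : 'rV[R]_n) : 0 <= sqn u.
Proof. by apply: sumr_ge0 => i _; rewrite -expr2 sqr_ge0. Qed.
Lemma sqnZ n a (u : 'rV[R]_n) : sqn (a *: u) = a ^+ 2 * sqn u.
Proof. by rewrite /sqn dotvZl dotvZr mulrA expr2. Qed.
Lemma enormZ n a (u : 'rV[R]_n) : 0 <= a -> enorm (a *: u) = a * enorm u.
Proof.
move=> ha; rewrite /enorm sqnZ sqrtrM ?sqr_ge0 // sqrtr_sqr ger0_norm //.
Qed.
Lemma enorm_ge0 n (u : 'rV[R]_n) : 0 <= enorm u.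
Proof. exact: sqrtr_ge0. Qed.

Lemma le0_small (A B : R) : 0 <= B -> (forall t, 0 < t -> t <= 1 -> A <= t * B) -> A <= 0.
Proof.
move=> hB h; rewrite leNgt; apply/negP => hA.
have h2 : 0 < 2 * A + B by lra.
have ht : 0 < A / (2 * A + B) by rewrite divr_gt0.
have ht1 : A / (2 * A + B) <= 1 by rewrite ler_pdivrMr // mul1r; lra.
have := h _ ht ht1.
rewrite mulrAC ler_pdivlMr // => H.
nra.
Qed.

Lemma grad_convex n (F : 'rV[R]_n -> R) (x x' G : 'rV[R]_n) :
  is_grad F x G ->
  (forall t, 0 < t -> t < 1 -> F (t *: x' + (1 - t) *: x) <= t * F x' + (1 - t) * F x) ->
  dotv G (x' - x) <= F x' - F x.
Proof.
move=> hG hC.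
have hN := enorm_ge0 (x' - x).
set N := enorm (x' - x) in hN *.
suff: dotv G (x'-x) - (F x' - F x) <= 0 by lra.
apply: (le0_small hN) => eps he he1.
have [d hd hF] := hG eps he.
set t := d / (2 * (N + d)).
have ht : 0 < t by rewrite divr_gt0 //; lra.
have ht1 : t < 1 by rewrite ltr_pdivrMr; lra.
have htN : t * N < d.
  rewrite mulrAC ltr_pdivrMr; [nra|lra].
have E : t *: x' + (1 - t) *: x = x + t *: (x' - x).
  by rewrite scalerBr scalerBl scale1r addrCA.
have := hF (t *: (x' - x)); rewrite enormZ; last exact: ltW.
move=> /(_ htN).
rewrite dotvZr -E ler_norml => /andP[h1 h2].
have := hC t ht ht1 => h3.
have : t * (dotv G (x' - x) - (F x' - F x) - eps * N) <= 0.
  rewrite -/N in h1; clear h2 E hF hC; clearbody t N; lra.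
rewrite (pmulr_rle0 _ ht); lra.
Qed.

Lemma sqn_addZ n (a b : 'rV[R]_n) t :
  sqn (a + t *: b) = sqn a + 2 * t * dotv a b + t ^+ 2 * sqn b.
Proof.
rewrite /sqn !(dotvDl, dotvDr, dotvZl, dotvZr) (dotvC b a); ring.
Qed.

Definition cvx_fin n (h : 'rV[R]_n -> \bar R) :=
  forall x y t, 0 < t -> t <= 1 -> h x \is a fin_num -> h y \is a fin_num ->
    (h (t *: x + (1 - t) *: y)%R <= (t * fine (h x) + (1 - t) * fine (h y))%:E)%E.

Lemma prox_vi n (h : 'rV[R]_n -> \bar R) lam w p x :
  0 < lam -> (forall u, h u != -oo%E) -> cvx_fin h ->
  is_prox h lam w p -> h x \is a fin_num ->
  h p \is a fin_num /\ lam * (fine (h p) - fine (h x)) <= dotv (p - w) (x - p).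
Proof.
move=> hl hninf hc hP hx.
have hp : h p \is a fin_num.
  have := hP x; rewrite -(fineK hx) -EFinD.
  case E: (h p) (hninf p) => [r| |] //= _.
split => //.
set hpr := fine (h p); set hxr := fine (h x).
have Ep : h p = hpr%:E by rewrite fineK.
set c := (2 * lam)^-1.
have hcp : 0 < c by rewrite invr_gt0; lra.
set s := sqn (x - p); set d := dotv (p - w) (x - p).
have hs : 0 <= s by exact: sqn_ge0.
suff : lam * (hpr - hxr) - d <= 0 by lra.
apply: (le0_small (B := s / 2)); first by lra.
move=> t ht ht1.
have := hP (t *: x + (1 - t) *: p).
have E : t *: x + (1 - t) *: p - w = (p - w) + t *: (x - p).
  by apply/rowP => i; rewrite !mxE; ring.
rewrite E sqn_addZ -/s -/d.
have := hc x p t ht ht1 hx hp; rewrite -/hpr -/hxr => hcv.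
rewrite Ep => H.
have := le_trans H (leeD2r _ hcv); rewrite -!EFinD lee_fin => H2.
rewrite -/c in H2.
have H3 : t * (hpr - hxr) <= c * (2 * t * d + t ^+ 2 * s) by lra.
have e : 2 * lam * c = 1 by rewrite /c mulfV //; lra.
have h2l : 0 <= 2 * lam by lra.
have H4 : 2 * lam * (t * (hpr - hxr)) <= 2 * t * d + t ^+ 2 * s.
  have -> : 2 * t * d + t ^+ 2 * s = 2 * lam * (c * (2 * t * d + t ^+ 2 * s)).
    by rewrite mulrA e mul1r.
  rewrite ler_pM2l; [exact: H3 | lra].
have : t * (2 * (lam * (hpr - hxr) - d) - t * s) <= 0 by rewrite expr2 in H4; lra.
rewrite (pmulr_rle0 _ ht); lra.
Qed.

Lemma cvx_of_convex n (h : 'rV[R]_n -> \bar R) : convex_fun h -> cvx_fin h.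
Proof.
move=> hc x y t ht ht1 hx hy.
have := hc x y t; rewrite -(fineK hx) -(fineK hy) -!EFinM -EFinD !fineK //.
by apply; apply/andP; split; lra.
Qed.

Lemma fconj_ub n (f : 'rV[R]_n -> \bar R) y u :
  ((dotv y u)%:E - f u <= fconj f y)%E.
Proof. by apply: ereal_sup_ubound; exists u. Qed.

Lemma fconj_ninf n (f : 'rV[R]_n -> \bar R) : proper_fun f -> forall y, fconj f y != -oo%E.
Proof.
case=> hn [u hu] y.
have hf : f u \is a fin_num by rewrite fin_numElt hu andbT ltNye.
have := fconj_ub f y u; rewrite -(fineK hf) -EFinB.
by case: (fconj f y).
Qed.

Lemma fconj_cvx n (f : 'rV[R]_n -> \bar R) : proper_fun f -> cvx_fin (fconj f).
Proof.
case=> hn _ x y t ht ht1 hx hy.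
apply: ge_ereal_sup => _ [u _ <-].
case E: (f u) (hn u) => [r| |] // _; last by rewrite /= leNye.
have H1 := fconj_ub f x u; have H2 := fconj_ub f y u.
rewrite E -(fineK hx) -EFinB lee_fin in H1.
rewrite E -(fineK hy) -EFinB lee_fin in H2.
rewrite -EFinB lee_fin dotvDl !dotvZl.
have ht' : 0 <= 1 - t by lra.
have := ler_wpM2l (ltW ht) H1; have := ler_wpM2l ht' H2.
lra.
Qed.

Lemma sqnB n (u v : 'rV[R]_n) : sqn (u - v) = sqn u - 2 * dotv u v + sqn v.
Proof. by rewrite -scaleN1r sqn_addZ; ring. Qed.

Lemma young n (a b : 'rV[R]_n) k : 0 < k -> 2 * dotv a b <= k * sqn a + k^-1 * sqn b.
Proof.
move=> hk.
have := sqn_ge0 (b + (- k) *: a); rewrite sqn_addZ (dotvC b a) => h.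
suff : 0 <= k * (k * sqn a + k^-1 * sqn b - 2 * dotv a b) by rewrite pmulr_rge0 //; lra.
have -> : k * (k * sqn a + k^-1 * sqn b - 2 * dotv a b)
  = sqn b + 2 * - k * dotv a b + (- k) ^+ 2 * sqn a by field; lra.
exact: h.
Qed.

Lemma nsd n (u v : 'rV[R]_n) psi phi dl : 0 < psi -> 0 < dl -> dl <= phi ->
  - (1 + psi^-1) * sqn u + dl * psi * (sqn u - sqn v - sqn (u - v))
  + (2 * psi - psi ^+ 3 * phi / (1 + psi)) * dl * sqn (u - v) <= 0.
Proof.
move=> hp hd hdp.
set K := psi ^+ 3 * phi / (1 + psi).
have hphi : 0 < phi by lra.
have hK : 0 < K by rewrite /K divr_gt0 ?mulr_gt0 ?exprn_gt0 //; lra.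
have hS := sqn_ge0 (v + ((psi - K) / K) *: u).
rewrite sqn_addZ (dotvC v u) in hS.
have hu := sqn_ge0 u.
rewrite sqnB.
set su := sqn u in hS hu *; set sv := sqn v in hS *; set d := dotv u v in hS *.
have -> : - (1 + psi^-1) * su + dl * psi * (su - sv - (su - 2 * d + sv))
  + (2 * psi - K) * dl * (su - 2 * d + sv)
  = - (K * dl) * (sv + 2 * ((psi - K) / K) * d + ((psi - K) / K) ^+ 2 * su)
    - (psi ^+ 2 * (phi - dl) / K) * su.
  rewrite /K; field; apply/andP; split; lra.
have h1 : 0 <= (K * dl) * (sv + 2 * ((psi - K) / K) * d + ((psi - K) / K) ^+ 2 * su).
  by apply: mulr_ge0 => //; apply: mulr_ge0; lra.
have h2 : 0 <= (psi ^+ 2 * (phi - dl) / K) * su.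
  apply: mulr_ge0 => //; apply: divr_ge0; last lra.
  apply: mulr_ge0; [exact: sqr_ge0 | lra].
lra.
Qed.

Lemma key q p (xn zn xn1 xs G0 G1 : 'rV[R]_q) (y0 yn ys Gy : 'rV[R]_p)
  (psi xi varphi beta t0 t1 D W gxn gxn1 gxs fyn fys Pns Psn Pnn Pn0 : R) :
  1 < psi -> 0 < xi -> 0 < beta -> 0 < t0 -> 0 < t1 -> t1 / t0 <= varphi ->
  t1 * (gxn1 - gxs) <=
    dotv (xn1 - (((psi - 1) / psi) *: xn + psi^-1 *: zn - t1 *: G1)) (xs - xn1) ->
  t0 * (gxn - gxn1) <= dotv (xn - (zn - t0 *: G0)) (xn1 - xn) ->
  (beta * t1) * (fyn - fys) <= dotv (yn - (y0 + (beta * t1) *: Gy)) (ys - yn) ->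
  dotv G1 (xs - xn) <= Psn - Pnn ->
  Pns <= Pn0 + dotv Gy (ys - y0) ->
  psi / (psi - 1) * sqn (((psi - 1) / psi) *: xn1
      + psi^-1 *: (((psi - 1) / psi) *: xn + psi^-1 *: zn) - xs)
  + beta^-1 * sqn (yn - ys) + omega_of psi xi varphi * (t1 / t0) * sqn (xn1 - xn)
  + 2 * t1 * (gxn + Pns - fys - (gxs + Psn - fyn))
  <= psi / (psi - 1) * sqn (((psi - 1) / psi) *: xn + psi^-1 *: zn - xs)
     + beta^-1 * sqn (y0 - ys) + omega_of psi xi varphi * D * W
     - (- (t1 * t0 / xi * sqn (G1 - G0)) + beta^-1 * sqn (yn - y0)
        + omega_of psi xi varphi * D * W
        - 2 * t1 * (Pn0 + dotv Gy (yn - y0) - Pnn)).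
Proof.
move=> hpsi hxi hb ht0 ht1 hdl H1 H2 H3 H4 H5.
set zn1 := ((psi - 1) / psi) *: xn + psi^-1 *: zn.
have hdl0 : 0 < t1 / t0 by rewrite divr_gt0.
have hpsi0 : 0 < psi by lra.
have SN := nsd (xn1 - zn1) (xn - zn1) hpsi0 hdl0 hdl.
have SY0 := young (G1 - G0) (xn - xn1) (k := t0 / xi) (divr_gt0 ht0 hxi).
have SY := ler_wpM2l (ltW ht1) SY0.
set S1 := dotv (xn1 - (zn1 - t1 *: G1)) (xs - xn1) - t1 * (gxn1 - gxs).
set S2 := dotv (xn - (zn - t0 *: G0)) (xn1 - xn) - t0 * (gxn - gxn1).
set S3 := dotv (yn - (y0 + (beta * t1) *: Gy)) (ys - yn) - (beta * t1) * (fyn - fys).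
set S4 := Psn - Pnn - dotv G1 (xs - xn).
set S5 := Pn0 + dotv Gy (ys - y0) - Pns.
have h1 : 0 <= S1 by rewrite /S1; lra.
have h2 : 0 <= (t1 / t0) * S2 by apply: mulr_ge0; [lra | rewrite /S2; lra].
have h3 : 0 <= beta^-1 * S3 by apply: mulr_ge0; [rewrite invr_ge0; lra | rewrite /S3; lra].
have h4 : 0 <= t1 * S4 by apply: mulr_ge0; [lra | rewrite /S4; lra].
have h5 : 0 <= t1 * S5 by apply: mulr_ge0; [lra | rewrite /S5; lra].
rewrite -subr_ge0.
set X := (X in 0 <= X).
  have -> : X = 2 * S1 + 2 * ((t1 / t0) * S2) + 2 * (beta^-1 * S3) + 2 * (t1 * S4)
     + 2 * (t1 * S5)
     + (t1 * ((t0 / xi) * sqn (G1 - G0) + (t0 / xi)^-1 * sqn (xn - xn1))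
        - t1 * (2 * dotv (G1 - G0) (xn - xn1)))
     - (- (1 + psi^-1) * sqn (xn1 - zn1) + t1 / t0 * psi * (sqn (xn1 - zn1)
         - sqn (xn - zn1) - sqn (xn1 - zn1 - (xn - zn1)))
        + (2 * psi - psi ^+ 3 * varphi / (1 + psi)) * (t1 / t0)
          * sqn (xn1 - zn1 - (xn - zn1))).
  rewrite /X /S1 /S2 /S3 /S4 /S5 /zn1 /omega_of /sqn.
  rewrite !(dotvDl, dotvDr, dotvNl, dotvNr, dotvZl, dotvZr).
  rewrite ?(dotvC zn xn) ?(dotvC xn1 xn) ?(dotvC xs xn) ?(dotvC G0 xn) ?(dotvC G1 xn).
  rewrite ?(dotvC xn1 zn) ?(dotvC xs zn) ?(dotvC G0 zn) ?(dotvC G1 zn).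
  rewrite ?(dotvC xs xn1) ?(dotvC G0 xn1) ?(dotvC G1 xn1).
  rewrite ?(dotvC G0 xs) ?(dotvC G1 xs) ?(dotvC G1 G0).
  rewrite ?(dotvC yn y0) ?(dotvC ys y0) ?(dotvC Gy y0) ?(dotvC ys yn) ?(dotvC Gy yn).
  rewrite ?(dotvC Gy ys).
  field.
  by repeat (apply/andP; split); lra.
lra.
Qed.

Lemma is_grad_opp n (F : 'rV[R]_n -> R) x G :
  is_grad F x G -> is_grad (fun v => - F v) x (- G).
Proof.
move=> hG eps he; have [d hd hF] := hG eps he; exists d => // h hh.
have := hF h hh; rewrite dotvNl.
have -> : - F (x + h) - - F x - - dotv G h = - (F (x + h) - F x - dotv G h) by ring.
by rewrite normrN.
Qed.

Lemma fin_edom n (h : 'rV[R]_n -> \bar R) x : h x \is a fin_num -> edom h x.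
Proof. by rewrite fin_numElt => /andP[]. Qed.
End Aux.


Unset Implicit Arguments.
Set Strict Implicit.

Theorem lemma3p2 (R : realType) (p q : nat)
  (f : 'rV[R]_p -> \bar R) (g : 'rV[R]_q -> \bar R)
  (Phi : 'rV[R]_q -> 'rV[R]_p -> R)
  (gx : 'rV[R]_q -> 'rV[R]_p -> 'rV[R]_q) (gy : 'rV[R]_q -> 'rV[R]_p -> 'rV[R]_p)
  (hf : proper_closed_convex f) (hg : proper_closed_convex g)
  (hPhi : Phi_continuous f g Phi)
  (hA1 : assumption_A1 f g Phi gx gy) (hA2 : assumption_A2 f g Phi gx gy)
  (psi xi varphi taumax nu mu eta beta : R) (M : nat)
  (hpar : pdacl_params psi xi varphi taumax nu mu eta beta M)
  (x z : nat -> 'rV[R]_q) (y : nat -> 'rV[R]_p) (tau delta : nat -> R)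
  (idx : nat -> nat)
  (hit : pdacl_iterates f g Phi gx gy psi xi varphi taumax nu mu eta beta M
           x z y tau delta idx)
  (xs : 'rV[R]_q) (ys : 'rV[R]_p) (hOm : in_Omega f g gx gy xs ys) :
  forall n : nat, (1 <= n)%N ->
    ((a_seq psi xi varphi beta xs ys x z y delta n.+1)%:E
       + (2 * tau n)%:E * Jgap f g Phi xs ys (x n) (y n)
     <= (a_seq psi xi varphi beta xs ys x z y delta n
         - b_seq Phi gx gy psi xi varphi beta x y tau delta n)%:E)%E.
Proof.
case: hpar => [[[hpsi1 hpsi2] hxi hphi hom htm] [/andP[hnu1 hnu2] /andP[hmu1 hmu2] _ _ hbeta]].
case: hit => [[hx0 hy0 /andP[ht0 _] hz0 hd0] hstep].
case: hOm => [hxsd hysd [hgxs _] [hfys _]].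
case: hg => [[hgninf _] _ hgc].
case: hf => [hfp _ _].
case: hA2 => [hPx hPy _].
have htau : forall n, 0 < tau n.
  elim=> [|n IH] //.
  have := hstep n => /= -[[_ _ ->] _].
  rewrite mulr_gt0 ?exprn_gt0 // lt_min htm andbT mulr_gt0 //; lra.
have hdel : forall n, tau n.+1 / tau n <= varphi.
  move=> n; have := hstep n => /= -[[_ _ ->] _].
  rewrite ler_pdivrMr //; apply: le_trans (ler_piMr _ _) _.
  - by rewrite le_min; apply/andP; split; [apply: mulr_ge0; [lra|exact: ltW]|lra].
  - by rewrite exprn_ile1 //; lra.
  - by rewrite ge_min lexx.
have hgcv := cvx_of_convex hgc.
have hfn := fconj_ninf hfp.
have hfcv := fconj_cvx hfp.
have hxfin : forall n, g (x n) \is a fin_num.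
  case=> [|n].
    by rewrite fin_numElt hx0 andbT ltNye.
  have := hstep n => /= -[[_ hpx _] _].
  by have [] := prox_vi (htau n) hgninf hgcv hpx hgxs.
have hyfin : forall n, fconj f (y n) \is a fin_num.
  case=> [|n].
    by rewrite fin_numElt hy0 andbT ltNye.
  have := hstep n => /= -[_ [hpy _ _ _]].
  have hbt : 0 < beta * tau n.+1 by rewrite mulr_gt0.
  by have [] := prox_vi hbt hfn hfcv hpy hfys.
case=> [//|m] _.
have [[hz1 hpx1 _] [hpy1 _ _ hdel1]] := hstep m.
have [[hz2 hpx2 _] _] := hstep m.+1.
have [[hz3 _ _] _] := hstep m.+2.
have [_ H2] := prox_vi (htau m) hgninf hgcv hpx1 (hxfin m.+2).
have [_ H1] := prox_vi (htau m.+1) hgninf hgcv hpx2 hgxs.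
have hbt : 0 < beta * tau m.+1 by rewrite mulr_gt0.
have [_ H3] := prox_vi hbt hfn hfcv hpy1 hfys.
have H4 : dotv (gx (x m.+1) (y m.+1)) (xs - x m.+1)
    <= Phi xs (y m.+1) - Phi (x m.+1) (y m.+1).
  have [hc hgr] := hPx _ (fin_edom (hyfin m.+1)).
  apply: (grad_convex (F := fun u => Phi u (y m.+1))).
    exact: hgr (fin_edom (hxfin m.+1)).
  move=> t ht ht1; apply: hc => //; first exact: fin_edom.
  by apply/andP; split; lra.
have H5 : Phi (x m.+1) ys <= Phi (x m.+1) (y m) + dotv (gy (x m.+1) (y m)) (ys - y m).
  have [hc hgr] := hPy _ (fin_edom (hxfin m.+1)).
  have Hc : forall t, 0 < t -> t < 1 -> - Phi (x m.+1) (t *: ys + (1 - t) *: y m)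
      <= t * - Phi (x m.+1) ys + (1 - t) * - Phi (x m.+1) (y m).
    move=> t ht ht1.
    have ht01 : 0 <= t <= 1 by apply/andP; split; lra.
    have := hc ys (y m) t hysd (fin_edom (hyfin m)) ht01; lra.
  have := grad_convex (is_grad_opp (hgr _ (fin_edom (hyfin m)))) Hc.
  rewrite dotvNl; lra.
have EJ : Jgap f g Phi xs ys (x m.+1) (y m.+1) =
  (fine (g (x m.+1)) + Phi (x m.+1) ys - fine (fconj f ys)
   - (fine (g xs) + Phi xs (y m.+1) - fine (fconj f (y m.+1))))%:E.
  rewrite /Jgap /Lag !(EFinB, EFinD) !fineK //.
rewrite EJ -EFinM -EFinD lee_fin.
rewrite /a_seq /b_seq /= hz3 hz2 hdel1.
rewrite hz2 in H1.
exact: (key (delta m) (sqn (x m.+1 - x m)) hpsi1 hxi hbeta (htau m) (htau m.+1) (hdel m) H1 H2 H3 H4 H5).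
Qed.
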